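(* Let $p$ be an intrinsic cross cap of a Whitney metric $d\sigma^2$ on a $2$-manifold, and let $(u,v)$ be a local coordinate system centered at $p$ that is adjusted at $p$, with $d\sigma^2=E\,du^2+2F\,du\,dv+G\,dv^2$ and $\delta:=EG-F^2$. Then at $(u,v)=(0,0)$, $$\delta_{uu}\delta_{vv}-\delta_{uv}^2=4E\Delta,\qquad \Delta:=\det\begin{pmatrix}E&F_u&F_v\\ F_u&G_{uu}/2&G_{uv}/2\\ F_v&G_{uv}/2&G_{vv}/2\end{pmatrix}\Bigg|_{(0,0)}.$$
   Context: For a smooth positive semi-definite metric $d\sigma^2$ with $\langle\cdot,\cdot\rangle=d\sigma^2$: singular points are where it is not positive definite; $\mathcal{N}_p$ is the null space; the Kossowski pseudo-connection is $\Gamma(X,Y,Z)=\tfrac12\bigl(X\langle Y,Z\rangle+Y\langle X,Z\rangle-Z\langle X,Y\rangle+\langle[X,Y],Z\rangle-\langle[X,Z],Y\rangle-\langle[Y,Z],X\rangle\bigr)$; admissible: at each singular point $p$, $\Gamma(V_1,V_2,V_3)(p)=0$ whenever $V_3(p)\in\mathcal{N}_p$. A singular point $p$ of an admissible metric is an intrinsic cross cap if in local coordinates $(u,v)$ centered at $p$, with $\delta=EG-F^2$, $\delta_{uu}\delta_{vv}-\delta_{uv}^2\ne0$ at $p$. A Whitney metric is an admissible metric all of whose singular points are intrinsic cross caps. A coordinate system $(u,v)$ is adjusted at $p$ if $\partial_v\in\mathcal{N}_p$. *)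

(* Defs.v *)
From Stdlib Require Import Reals List.
From Coquelicot Require Import Coquelicot.
Open Scope R_scope.

Definition pu (f : R -> R -> R) : R -> R -> R := fun u v => Derive (fun t => f t v) u.
Definition pv (f : R -> R -> R) : R -> R -> R := fun u v => Derive (fun t => f u t) v.

Fixpoint pd (w : list bool) (f : R -> R -> R) : R -> R -> R :=
  match w with
  | nil => f
  | b :: w' => (if b then pu else pv) (pd w' f)
  end.

Definition open2 (U : R -> R -> Prop) : Prop :=
  forall u v, U u v -> exists eps, 0 < eps /\
    forall u' v', Rabs (u' - u) < eps -> Rabs (v' - v) < eps -> U u' v'.

Definition cont2 (f : R -> R -> R) (u v : R) : Prop :=
  forall eps, 0 < eps -> exists d, 0 < d /\
    forall u' v', Rabs (u' - u) < d -> Rabs (v' - v) < d ->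
      Rabs (f u' v' - f u v) < eps.

Definition smooth_on (U : R -> R -> Prop) (f : R -> R -> R) : Prop :=
  forall (w : list bool) u v, U u v ->
    cont2 (pd w f) u v /\
    ex_derive (fun t => pd w f t v) u /\
    ex_derive (fun t => pd w f u t) v.

(* Vector fields X = X1 d/du + X2 d/dv. *)
Definition vf := ((R -> R -> R) * (R -> R -> R))%type.

Definition vf_smooth_on (U : R -> R -> Prop) (X : vf) : Prop :=
  smooth_on U (fst X) /\ smooth_on U (snd X).

Definition act (X : vf) (f : R -> R -> R) : R -> R -> R :=
  fun u v => fst X u v * pu f u v + snd X u v * pv f u v.

Definition bracket (X Y : vf) : vf :=
  (fun u v => act X (fst Y) u v - act Y (fst X) u v,
   fun u v => act X (snd Y) u v - act Y (snd X) u v).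

Definition metric (E F G : R -> R -> R) (X Y : vf) : R -> R -> R :=
  fun u v => E u v * fst X u v * fst Y u v
           + F u v * (fst X u v * snd Y u v + snd X u v * fst Y u v)
           + G u v * snd X u v * snd Y u v.

Definition Gamma (E F G : R -> R -> R) (X Y Z : vf) : R -> R -> R :=
  fun u v => / 2 * ( act X (metric E F G Y Z) u v
                   + act Y (metric E F G X Z) u v
                   - act Z (metric E F G X Y) u v
                   + metric E F G (bracket X Y) Z u v
                   - metric E F G (bracket X Z) Y u v
                   - metric E F G (bracket Y Z) X u v).

Definition qform (E F G : R -> R -> R) (u v a b : R) : R :=
  E u v * a * a + 2 * F u v * a * b + G u v * b * b.

Definition in_null (E F G : R -> R -> R) (u v a b : R) : Prop :=
  E u v * a + F u v * b = 0 /\ F u v * a + G u v * b = 0.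

Definition singular_pt (E F G : R -> R -> R) (u v : R) : Prop :=
  ~ (forall a b, (a <> 0 \/ b <> 0) -> 0 < qform E F G u v a b).

Definition psd_metric_on (U : R -> R -> Prop) (E F G : R -> R -> R) : Prop :=
  smooth_on U E /\ smooth_on U F /\ smooth_on U G /\
  (forall u v, U u v -> forall a b, 0 <= qform E F G u v a b).

Definition admissible_on (U : R -> R -> Prop) (E F G : R -> R -> R) : Prop :=
  forall u v, U u v -> singular_pt E F G u v ->
    forall V1 V2 V3 : vf,
      vf_smooth_on U V1 -> vf_smooth_on U V2 -> vf_smooth_on U V3 ->
      in_null E F G u v (fst V3 u v) (snd V3 u v) ->
      Gamma E F G V1 V2 V3 u v = 0.

Definition delta (E F G : R -> R -> R) : R -> R -> R :=
  fun u v => E u v * G u v - F u v ^ 2.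

Definition hess_det (f : R -> R -> R) (u v : R) : R :=
  pu (pu f) u v * pv (pv f) u v - (pv (pu f) u v) ^ 2.

(* intrinsic cross cap (in coordinates; translation to center at (u,v)
   does not change derivatives) *)
Definition intrinsic_cross_cap (U : R -> R -> Prop) (E F G : R -> R -> R) (u v : R) : Prop :=
  admissible_on U E F G /\ singular_pt E F G u v /\ hess_det (delta E F G) u v <> 0.

Definition whitney_on (U : R -> R -> Prop) (E F G : R -> R -> R) : Prop :=
  psd_metric_on U E F G /\ admissible_on U E F G /\
  (forall u v, U u v -> singular_pt E F G u v -> intrinsic_cross_cap U E F G u v).

Definition det3 (a11 a12 a13 a21 a22 a23 a31 a32 a33 : R) : R :=
  a11 * (a22 * a33 - a23 * a32)
  - a12 * (a21 * a33 - a23 * a31)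
  + a13 * (a21 * a32 - a22 * a31).

(* Main.v *)
Require Import Defs.
From Stdlib Require Import Reals Lra FunctionalExtensionality.
From Coquelicot Require Import Coquelicot.
Open Scope R_scope.

Lemma isd_eq (f : R -> R) x l r : is_derive f x l -> l = r -> is_derive f x r.
Proof. intros; subst; auto. Qed.

Lemma d1 (e g f : R -> R) t :
  ex_derive e t -> ex_derive g t -> ex_derive f t ->
  Derive (fun s => e s * g s - f s ^ 2) t =
  Derive e t * g t + e t * Derive g t - 2 * f t * Derive f t.
Proof.
  intros He Hg Hf.
  pose proof (is_derive_minus _ _ _ _ _
    (is_derive_mult _ _ _ _ _ (Derive_correct _ _ He) (Derive_correct _ _ Hg) Rmult_comm)
    (is_derive_pow f 2 _ _ (Derive_correct _ _ Hf))) as H.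
  apply is_derive_unique; eapply isd_eq; [exact H|].
  unfold minus, plus, mult, opp; simpl. ring.
Qed.

Lemma d2 (a b c e g f : R -> R) t :
  ex_derive a t -> ex_derive b t -> ex_derive c t ->
  ex_derive e t -> ex_derive g t -> ex_derive f t ->
  Derive (fun s => a s * g s + e s * b s - 2 * f s * c s) t =
  Derive a t * g t + a t * Derive g t + Derive e t * b t + e t * Derive b t
  - 2 * (Derive f t * c t + f t * Derive c t).
Proof.
  intros Ha Hb Hc He Hg Hf.
  pose proof (is_derive_minus _ _ _ _ _
    (is_derive_plus _ _ _ _ _
      (is_derive_mult _ _ _ _ _ (Derive_correct _ _ Ha) (Derive_correct _ _ Hg) Rmult_comm)
      (is_derive_mult _ _ _ _ _ (Derive_correct _ _ He) (Derive_correct _ _ Hb) Rmult_comm))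
    (is_derive_mult _ _ _ _ _ (is_derive_scal _ _ 2 _ (Derive_correct _ _ Hf))
       (Derive_correct _ _ Hc) Rmult_comm)) as H.
  apply is_derive_unique; eapply isd_eq; [exact H|].
  unfold minus, plus, mult, opp; simpl. ring.
Qed.

Lemma smooth_const U c : smooth_on U (fun _ _ => c).
Proof.
  assert (Hk : forall w, exists k, pd w (fun _ _ => c) = fun _ _ => k).
  { induction w as [|b w IH]. exists c; reflexivity.
    destruct IH as [k Hk]. exists 0. simpl. rewrite Hk.
    destruct b; unfold pu, pv; apply functional_extensionality; intro;
      apply functional_extensionality; intro; apply Derive_const. }
  intros w u v _. destruct (Hk w) as [k ->]. split; [|split; apply ex_derive_const].
  intros eps Heps. exists 1. split. lra. intros. rewrite Rminus_diag, Rabs_R0. exact Heps.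
Qed.

Lemma c2 (A B C D : Prop) : (A /\ B /\ C /\ D) -> B. Proof. tauto. Qed.
Lemma c4 (A B C D : Prop) : (A /\ B /\ C /\ D) -> D. Proof. tauto. Qed.

Definition cu : vf := (fun _ _ => 1, fun _ _ => 0).
Definition cv : vf := (fun _ _ => 0, fun _ _ => 1).

Theorem proposition4p4 (U : R -> R -> Prop) (E F G : R -> R -> R) :
  open2 U -> U 0 0 ->
  whitney_on U E F G ->
  intrinsic_cross_cap U E F G 0 0 ->
  in_null E F G 0 0 0 1 ->
  hess_det (delta E F G) 0 0 =
  4 * E 0 0 *
  det3 (E 0 0)      (pu F 0 0)           (pv F 0 0)
       (pu F 0 0)   (pu (pu G) 0 0 / 2)  (pv (pu G) 0 0 / 2)
       (pv F 0 0)   (pv (pu G) 0 0 / 2)  (pv (pv G) 0 0 / 2).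
Proof.
  intros Hop HU0 [[SE [SF [SG _]]] [Adm _]] _ [HN1 HN2].
  assert (F0 : F 0 0 = 0) by lra.
  assert (G0 : G 0 0 = 0) by lra.
  assert (Sing : singular_pt E F G 0 0).
  { intro H. specialize (H 0 1 (or_intror R1_neq_R0)). unfold qform in H.
    rewrite G0 in H. lra. }
  assert (Scu : vf_smooth_on U cu) by (split; simpl; apply smooth_const).
  assert (Scv : vf_smooth_on U cv) by (split; simpl; apply smooth_const).
  pose proof (Adm 0 0 HU0 Sing cu cv cv Scu Scv Scv (conj HN1 HN2)) as A1.
  pose proof (Adm 0 0 HU0 Sing cv cv cv Scv Scv Scv (conj HN1 HN2)) as A2.
  unfold Gamma, bracket, metric, act, pu, pv, cu, cv in A1, A2; simpl in A1, A2. rewrite !Derive_const in A1, A2.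
  rewrite (Derive_ext (fun t => E t 0 * 0 * 0 + F t 0 * (0 * 1 + 1 * 0) + G t 0 * 1 * 1) (fun t => G t 0)) in A1 by (intro; ring).
  rewrite (Derive_ext (fun t => E 0 t * 0 * 0 + F 0 t * (0 * 1 + 1 * 0) + G 0 t * 1 * 1) (fun t => G 0 t)) in A2 by (intro; ring).
  assert (Gu : pu G 0 0 = 0) by (unfold pu; lra).
  assert (Gv : pv G 0 0 = 0) by (unfold pv; lra).
  clear A1 A2.
  destruct (Hop 0 0 HU0) as [eps [Heps Hball]].
  assert (Ht : forall t, Rabs t < eps -> U t 0 /\ U 0 t).
  { intros t Ht. split; apply Hball; rewrite ?Rminus_0_r, ?Rabs_R0; auto. }
  assert (Loc : forall P : R -> Prop, (forall t, Rabs t < eps -> P t) -> locally 0 P).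
  { intros P HP. exists (mkposreal eps Heps). intros y Hy. apply HP.
    change (Rabs (y - 0) < eps) in Hy. rewrite Rminus_0_r in Hy. exact Hy. }
  assert (D1 : forall (f : R -> R -> R), smooth_on U f -> forall w t, Rabs t < eps ->
     ex_derive (fun s => pd w f s 0) t /\ ex_derive (fun s => pd w f 0 s) t /\
     ex_derive (fun s => pd w f t s) 0 /\ ex_derive (fun s => pd w f s t) 0).
  { intros f Sf w t Hte. destruct (Ht t Hte) as [H1 H2].
    destruct (Sf w t 0 H1) as [_ [A B]]. destruct (Sf w 0 t H2) as [_ [C D]].
    tauto. }
  assert (Huu : pu (pu (delta E F G)) 0 0 =
     pu (pu E) 0 0 * G 0 0 + pu E 0 0 * pu G 0 0 + pu E 0 0 * pu G 0 0 + E 0 0 * pu (pu G) 0 0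
     - 2 * (pu F 0 0 * pu F 0 0 + F 0 0 * pu (pu F) 0 0)).
  { unfold pu at 1. rewrite (Derive_ext_loc _ (fun t => pu E t 0 * G t 0 + E t 0 * pu G t 0 - 2 * F t 0 * pu F t 0)).
    - apply (d2 (fun t => pu E t 0) (fun t => pu G t 0) (fun t => pu F t 0) (fun t => E t 0) (fun t => G t 0) (fun t => F t 0));
      [apply (D1 E SE (cons true nil)) | apply (D1 G SG (cons true nil)) | apply (D1 F SF (cons true nil))
      |apply (D1 E SE nil) | apply (D1 G SG nil) | apply (D1 F SF nil)]; rewrite Rabs_R0; auto.
    - apply Loc. intros t Hte. unfold pu, delta.
      apply (d1 (fun s => E s 0) (fun s => G s 0) (fun s => F s 0));
      [apply (D1 E SE nil) | apply (D1 G SG nil) | apply (D1 F SF nil)]; auto. }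
  assert (Hvv : pv (pv (delta E F G)) 0 0 =
     pv (pv E) 0 0 * G 0 0 + pv E 0 0 * pv G 0 0 + pv E 0 0 * pv G 0 0 + E 0 0 * pv (pv G) 0 0
     - 2 * (pv F 0 0 * pv F 0 0 + F 0 0 * pv (pv F) 0 0)).
  { unfold pv at 1. rewrite (Derive_ext_loc _ (fun t => pv E 0 t * G 0 t + E 0 t * pv G 0 t - 2 * F 0 t * pv F 0 t)).
    - apply (d2 (fun t => pv E 0 t) (fun t => pv G 0 t) (fun t => pv F 0 t) (fun t => E 0 t) (fun t => G 0 t) (fun t => F 0 t));
      [eapply (c2 _ _ _ _ (D1 E SE (cons false nil) _ _)) | eapply (c2 _ _ _ _ (D1 G SG (cons false nil) _ _)) | eapply (c2 _ _ _ _ (D1 F SF (cons false nil) _ _))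
      |eapply (c2 _ _ _ _ (D1 E SE nil _ _)) | eapply (c2 _ _ _ _ (D1 G SG nil _ _)) | eapply (c2 _ _ _ _ (D1 F SF nil _ _))]; rewrite ?Rabs_R0; auto.
    - apply Loc. intros t Hte. unfold pv, delta.
      apply (d1 (fun s => E 0 s) (fun s => G 0 s) (fun s => F 0 s));
      [eapply (c2 _ _ _ _ (D1 E SE nil _ _)) | eapply (c2 _ _ _ _ (D1 G SG nil _ _)) | eapply (c2 _ _ _ _ (D1 F SF nil _ _))]; auto. }
  assert (Hvu : pv (pu (delta E F G)) 0 0 =
     pv (pu E) 0 0 * G 0 0 + pu E 0 0 * pv G 0 0 + pv E 0 0 * pu G 0 0 + E 0 0 * pv (pu G) 0 0
     - 2 * (pv F 0 0 * pu F 0 0 + F 0 0 * pv (pu F) 0 0)).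
  { unfold pv at 1. rewrite (Derive_ext_loc _ (fun t => pu E 0 t * G 0 t + E 0 t * pu G 0 t - 2 * F 0 t * pu F 0 t)).
    - apply (d2 (fun t => pu E 0 t) (fun t => pu G 0 t) (fun t => pu F 0 t) (fun t => E 0 t) (fun t => G 0 t) (fun t => F 0 t));
      [eapply (c2 _ _ _ _ (D1 E SE (cons true nil) _ _)) | eapply (c2 _ _ _ _ (D1 G SG (cons true nil) _ _)) | eapply (c2 _ _ _ _ (D1 F SF (cons true nil) _ _))
      |eapply (c2 _ _ _ _ (D1 E SE nil _ _)) | eapply (c2 _ _ _ _ (D1 G SG nil _ _)) | eapply (c2 _ _ _ _ (D1 F SF nil _ _))]; rewrite ?Rabs_R0; auto.
    - apply Loc. intros t Hte. unfold pu, delta.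
      apply (d1 (fun s => E s t) (fun s => G s t) (fun s => F s t));
      [eapply (c4 _ _ _ _ (D1 E SE nil _ _)) | eapply (c4 _ _ _ _ (D1 G SG nil _ _)) | eapply (c4 _ _ _ _ (D1 F SF nil _ _))]; auto. }
  unfold hess_det, det3. rewrite Huu, Hvv, Hvu, Gu, Gv, F0, G0. field.
Unshelve. all: rewrite ?Rabs_R0; assumption.
Qed.
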